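(* Let $n,d,k\in\mathbb{N}$ and let $G\subseteq\mathbb{N}$ be infinite (so $G\approx\omega$). Then there exists $H\subseteq\omega^d\cdot k$ with $H\approx\omega^d\cdot k$ such that every $e\in\binom{H}{n}$ satisfies some coloring rule on $\binom{\omega^d\cdot k}{n}$, and every coefficient of every element of $e$ lies in $G$.
   Context: Ordinals are identified with sets of smaller ordinals; $\approx$ is order-equivalence; $\binom{S}{n}$ is the set of $n$-element subsets. Every $\beta<\omega^d\cdot k$ is uniquely written $\beta=\omega^d b+\omega^{d-1}a_{d-1}+\cdots+\omega a_1+a_0$ with $0\le b<k$, $a_j\in\mathbb{N}$; the numbers $a_0,\dots,a_{d-1}$ are called the coefficients of $\beta$. A coloring rule (CR) on $\binom{\omega^d\cdot k}{n}$ is a pair $(\mathcal{Y},\preceq)$ with $\mathcal{Y}:\{1,\dots,n\}\to\{0,\dots,k-1\}$ and $\preceq$ a total preorder on $I=\{(i,j):1\le i\le n,0\le j<d\}$ (with induced equivalence $\equiv$ and strict part $\prec$) such that: (1) if $d\ge1$, $(i,0)\prec(i',0)$ for $i<i'$; if $d=0$, $\mathcal{Y}(i)<\mathcal{Y}(i')$ for $i<i'$; (2) $(i,j)\equiv(i',j)$ for some $j$ implies $\mathcal{Y}(i)=\mathcal{Y}(i')$; (3) $(i,j)\prec(i,j')$ for $j>j'$; (4) $(i,j)\equiv(i',j')$ implies $j=j'$; (5) for $j>0$, $(i,j)\not\equiv(i',j)$ implies $(i,j-1)\not\equiv(i',j-1)$. An edge $e\in\binom{\omega^d\cdot k}{n}$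 satisfies the CR $(\mathcal{Y},\preceq)$ if its elements can be enumerated as $p_i=\omega^d b_i+\sum_{j<d}\omega^j a_{i,j}$ ($1\le i\le n$) with $b_i=\mathcal{Y}(i)$ for all $i$ and $(i,j)\preceq(i',j')\iff a_{i,j}\le a_{i',j'}$ for all $(i,j),(i',j')\in I$. *)

(* Defs.v *)
From mathcomp Require Import all_boot.
Set Implicit Arguments. Unset Strict Implicit. Unset Printing Implicit Defensive.

(* An ordinal beta < omega^d * k is represented by its Cantor normal-form data
   (b, a) with beta = omega^d b + sum_{j<d} omega^j a_j;  b < k. *)
Definition cnf (d : nat) := (nat * {ffun 'I_d -> nat})%type.

Definition in_ord (d k : nat) (x : cnf d) : Prop := x.1 < k.

Definition cnf_lt (d : nat) (x y : cnf d) : Prop :=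
  x.1 < y.1 \/
  (x.1 = y.1 /\ exists j : 'I_d, x.2 j < y.2 j /\
     forall j' : 'I_d, j < j' -> x.2 j' = y.2 j').

Definition order_equiv_full (d k : nat) (H : cnf d -> Prop) : Prop :=
  (forall x, H x -> in_ord k x) /\
  exists f : cnf d -> cnf d,
    (forall x, in_ord k x -> H (f x)) /\
    (forall x y, in_ord k x -> in_ord k y -> cnf_lt x y -> cnf_lt (f x) (f y)) /\
    (forall y, H y -> exists2 x, in_ord k x & f x = y).

(* A coloring rule on [omega^d*k]^n; index set I = {1..n} x {0..d-1} is
   represented by 'I_n x 'I_d (i is shifted by one). The total preorder is [le]. *)
Definition is_CR (n d k : nat) (Y : 'I_n -> nat)
  (le : 'I_n -> 'I_d -> 'I_n -> 'I_d -> Prop) : Prop :=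
  let lt i j i' j' := le i j i' j' /\ ~ le i' j' i j in
  let eqv i j i' j' := le i j i' j' /\ le i' j' i j in
  (forall i, Y i < k) /\
  (forall i j, le i j i j) /\
  (forall i1 j1 i2 j2 i3 j3, le i1 j1 i2 j2 -> le i2 j2 i3 j3 -> le i1 j1 i3 j3) /\
  (forall i j i' j', le i j i' j' \/ le i' j' i j) /\
  (0 < d -> forall (j0 : 'I_d), val j0 = 0 ->
     forall i i' : 'I_n, i < i' -> lt i j0 i' j0) /\
  (d = 0 -> forall i i' : 'I_n, i < i' -> Y i < Y i') /\
  (forall i i' j, eqv i j i' j -> Y i = Y i') /\
  (forall i (j j' : 'I_d), j' < j -> lt i j i j') /\
  (forall i j i' j', eqv i j i' j' -> j = j') /\
  (forall (j jm : 'I_d), val j = (val jm).+1 ->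
     forall i i', ~ eqv i j i' j -> ~ eqv i jm i' jm).

Definition satisfies_CR (n d : nat) (p : 'I_n -> cnf d) (Y : 'I_n -> nat)
  (le : 'I_n -> 'I_d -> 'I_n -> 'I_d -> Prop) : Prop :=
  (forall i, (p i).1 = Y i) /\
  (forall i j i' j', le i j i' j' <-> (p i).2 j <= (p i').2 j').

Definition edge_satisfies_some_CR (n d k : nat) (p : 'I_n -> cnf d) : Prop :=
  exists (Y : 'I_n -> nat) (le : 'I_n -> 'I_d -> 'I_n -> 'I_d -> Prop),
    is_CR k Y le /\
    exists q : 'I_n -> cnf d,
      (forall x, (exists i, p i = x) <-> (exists i, q i = x)) /\
      satisfies_CR q Y le.

(* Main.v *)
Require Import Defs.
From mathcomp Require Import all_boot.
From mathcomp Require Import zify.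
From Stdlib Require Import ClassicalEpsilon.
Set Implicit Arguments. Unset Strict Implicit.

Definition pr (u a : nat) := 2 ^ u.+1 * (2 * a + 1).

Lemma pr_inj u a v b : pr u a = pr v b -> u = v /\ a = b.
Proof.
  rewrite /pr.
  wlog huv : u a v b / u <= v.
    move=> W E; case: (leqP u v) => h; first exact: W.
    by have [-> ->] := W v b u a (ltnW h) (esym E).
  move=> E.
  have [t ht] : exists t, v = u + t by exists (v - u); lia.
  subst v; clear huv.
  move: E; have -> : (u + t).+1 = u.+1 + t by lia.
  rewrite expnD -mulnA => /eqP; rewrite eqn_pmul2l ?expn_gt0 // => /eqP E.
  case: t E => [|t] E.
  - rewrite expn0 mul1n in E; split; lia.
  - exfalso; rewrite expnS -mulnA in E; lia.
Qed.

Lemma pr_gt u a : u < pr u a.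
Proof.
  rewrite /pr; apply: (leq_trans (ltnW (ltn_expl u.+1 (isT : 1 < 2)))).
  by rewrite leq_pmulr // addn1.
Qed.

Lemma pr_mono u a b : a < b -> pr u a < pr u b.
Proof. by move=> h; rewrite /pr ltn_pmul2l ?expn_gt0 //; lia. Qed.

Lemma pr_even u a : odd (pr u a) = false.
Proof. by rewrite /pr oddM oddX /=. Qed.

Definition co d (x : cnf d) (i : nat) : nat := oapp x.2 0 (insub i).

Lemma coE d (x : cnf d) (j : 'I_d) : co x (nat_of_ord j) = x.2 j.
Proof. by rewrite /co valK. Qed.

Lemma co_out d (x : cnf d) i : d <= i -> co x i = 0.
Proof. by move=> h; rewrite /co insubF // ltnNge h. Qed.

Fixpoint C d (x : cnf d) (m : nat) : nat :=
  if m is m'.+1 then pr (C x m') (co x (d - m)) else (2 * x.1 + 1).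

Lemma CL d (x y : cnf d) m m' : C x m = C y m' ->
  m = m' /\ x.1 = y.1 /\ forall t, t <= m -> C x t = C y t.
Proof.
  elim: m m' => [|m IH] [|m'] /=.
  - move=> E; split=> //; split; first lia.
    by move=> t; rewrite leqn0 => /eqP ->.
  - move=> E; have := congr1 odd E; rewrite pr_even oddD oddM /=.
    by [].
  - move=> E; have := congr1 odd E; rewrite pr_even oddD oddM /=.
    by [].
  - move=> /pr_inj [/IH [em [eb et]] ec]; subst m'.
    split=> //; split=> // t; rewrite leq_eqVlt => /orP [/eqP -> | ht].
    + by rewrite /= et // ec.
    + exact: et.
Qed.

Lemma C_mono d (x : cnf d) m t : m < t -> C x m < C x t.
Proof.
  elim: t => [//|t IH]; rewrite ltnS leq_eqVlt => /orP [/eqP -> | h].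
  - exact: pr_gt.
  - exact: (ltn_trans (IH h) (pr_gt _ _)).
Qed.

Lemma C_eq_above d (x y : cnf d) m : x.1 = y.1 ->
  (forall i, d - m <= i -> co x i = co y i) -> C x m = C y m.
Proof.
  move=> hb; elim: m => [|m IH] h /=; first by rewrite hb.
  rewrite IH ?h //. move=> i hi; apply: h; lia.
Qed.

Lemma choose_seq (G : nat -> Prop) : (forall m, exists2 x, m <= x & G x) ->
  exists g : nat -> nat, (forall t, G (g t)) /\ (forall s t, s < t -> g s < g t).
Proof.
  move=> HG.
  have h : forall m, {x | m <= x /\ G x}.
    move=> m; apply constructive_indefinite_description.
    by case: (HG m) => x ? ?; exists x.
  exists (fix g t := if t is t'.+1 then sval (h (g t').+1) else sval (h 0)).
  split.
  - by case=> [|t]; exact: (proj2 (svalP (h _))).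
  - move=> s t; elim: t => [//|t IH]; rewrite ltnS leq_eqVlt => /orP [/eqP -> | hs].
    + exact: (proj1 (svalP (h _))).
    + apply: (ltn_trans (IH hs)); exact: (proj1 (svalP (h _))).
Qed.
Theorem lemma9p2 (n d k : nat) (G : nat -> Prop)
  (G_infinite : forall m, exists2 x, m <= x & G x) :
  exists H : cnf d -> Prop,
    order_equiv_full k H /\
    forall p : 'I_n -> cnf d, injective p -> (forall i, H (p i)) ->
      edge_satisfies_some_CR k p /\
      (forall (i : 'I_n) (j : 'I_d), G ((p i).2 j)).
Proof.
  have [g [gG gmono]] := choose_seq G_infinite.
  have ginj : injective g.
    move=> s t E; case: (ltngtP s t) => // h; have := gmono _ _ h; lia.
  have glt : forall s t, (g s < g t) = (s < t).
    move=> s t; case: (ltngtP s t) => h; first exact: gmono.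
    - by have := gmono _ _ h; lia.
    - by subst; rewrite ltnn.
  pose f (x : cnf d) : cnf d := (x.1, [ffun j : 'I_d => g (C x (d - j))]).
  have fE : forall x (j : 'I_d), (f x).2 j = g (C x (d - j)) by move=> x j; rewrite ffunE.
  exists (fun y => exists2 x, in_ord k x & f x = y).
  split.
  { split; first by move=> y [x hx <-].
    exists f; split; first by move=> x hx; exists x.
    split; last by move=> y [x hx <-]; exists x.
    move=> x y _ _ [h|[hb [j [hj hab]]]]; first by left.
    right; split; first exact: hb.
    have eqab : forall m, m <= d - j.+1 -> C x m = C y m.
      move=> m hm; apply: C_eq_above => // i hi.
      case: (ltnP i d) => hid; last by rewrite !co_out.
      have -> : i = nat_of_ord (Ordinal hid) by [].
      rewrite !coE; apply: hab => /=; lia.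
    exists j; split.
    - rewrite !fE glt.
      have hj' : d - j = (d - j.+1).+1 by have := ltn_ord j; lia.
      rewrite hj' /= eqab // -hj'.
      have -> : d - (d - j) = nat_of_ord j by have := ltn_ord j; lia.
      by rewrite !coE; apply: pr_mono.
    - move=> j' hj'; rewrite !fE eqab //; lia. }
  move=> p pinj Hp; split; last first.
  { move=> i j; case: (Hp i) => x _ <-; rewrite fE; exact: gG. }
  pose kap (u : cnf d) := if 0 < d then co u 0 else u.1.
  have kinj : forall u v, (exists2 x, in_ord k x & f x = u) ->
       (exists2 x, in_ord k x & f x = v) -> kap u = kap v -> u = v.
    move=> u v [x _ <-] [y _ <-]; rewrite /kap.
    case: (posnP d) => hd /=.
    - move=> hb; congr pair => //; apply/ffunP => j; have := ltn_ord j; lia.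
    - have -> : 0 = nat_of_ord (Ordinal hd) by [].
      rewrite !coE !fE subn0 => /ginj /CL [_ [hb ht]].
      congr pair => //; apply/ffunP => j; rewrite !ffunE ht //; lia.
  pose s := [seq p i | i <- enum 'I_n].
  pose leT := fun u v : cnf d => kap u <= kap v.
  pose ss := sort leT s.
  pose x0 : cnf d := (0, [ffun=> 0]).
  have sz : size ss = n by rewrite size_sort size_map size_enum_ord.
  pose q (i : 'I_n) := nth x0 ss i.
  have memss : forall u, (u \in ss) = (u \in s) by move=> u; rewrite (perm_mem (permEl (perm_sort leT s))).
  have ins : forall u, (u \in s) <-> exists i, p i = u.
    move=> u; split; first by move/mapP => [i _ ->]; exists i.
    by move=> [i <-]; apply: map_f; rewrite mem_enum.
  have qin : forall i, q i \in ss by move=> i; rewrite mem_nth // sz.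
  have Hq : forall i, exists2 x, in_ord k x & f x = q i.
    move=> i; have := qin i; rewrite memss => /ins [i' <-]; exact: Hp.
  have uss : uniq ss.
    by rewrite sort_uniq map_inj_uniq ?enum_uniq.
  have qlt : forall i i' : 'I_n, i < i' -> kap (q i) < kap (q i').
    move=> i i' hii.
    have hle : leT (q i) (q i').
      apply: (sorted_leq_nth _ _ x0 (sort_sorted _ s)); rewrite ?inE ?sz //; try lia.
      + by move=> a b c; rewrite /leT; lia.
      + by move=> a; rewrite /leT.
      + by move=> a b; rewrite /leT leq_total.
    have hne : q i != q i'.
      by rewrite /q nth_uniq ?sz //; apply/eqP => E; by rewrite E ltnn in hii.
    rewrite /leT in hle; rewrite ltn_neqAle hle andbT; apply/eqP => E.
    by apply: (elimN eqP hne); apply: kinj (Hq i) (Hq i') E.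
  exists (fun i => (q i).1), (fun i j i' j' => (q i).2 j <= (q i').2 j').
  split; last first.
  { exists q; split; last by split.
    move=> u; rewrite -ins -memss; split; last by move=> [i <-]; exact: qin.
    by move/(nthP x0) => [i hi <-]; rewrite sz in hi; exists (Ordinal hi). }
  have hqc : forall (i : 'I_n), exists2 x : cnf d, in_ord k x &
      (q i).1 = x.1 /\ forall j, (q i).2 j = g (C x (d - j)).
    move=> i; case: (Hq i) => x hx <-; exists x => //; split => // j; exact: fE.
  have eqC : forall (i i' : 'I_n) (j j' : 'I_d), (q i).2 j = (q i').2 j' ->
      exists x y : cnf d, [/\ (q i).1 = x.1, (q i').1 = y.1 & C x (d - j) = C y (d - j')]
      /\ forall t, t <= d - j -> C x t = C y t.
    move=> i i' j j' E; case: (hqc i) => x _ [hb hc]; case: (hqc i') => y _ [hb' hc'].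
    move: E; rewrite hc hc' => /ginj E; exists x, y; split => //.
    by have [_ [_ ht]] := CL E.
  rewrite /is_CR /=.
  split; first by move=> i; case: (hqc i) => x hx [-> _].
  split; first by move=> i j.
  split; first by move=> i1 j1 i2 j2 i3 j3; apply: leq_trans.
  split; first by move=> i j i' j'; case/orP: (leq_total ((q i).2 j) ((q i').2 j')); tauto.
  split.
  { move=> hd j0 hj0 i i' hii; have := qlt i i' hii; rewrite /kap hd.
    have -> : 0 = nat_of_ord j0 by rewrite hj0.
    rewrite !coE => h; split; lia. }
  split.
  { move=> hd i i' hii; have := qlt i i' hii; rewrite /kap.
    have -> : (0 < d) = false by rewrite hd. done. }
  split.
  { move=> i i' j [h1 h2]; have E : (q i).2 j = (q i').2 j by lia.
    have [x [y [[hb hb' hC] _]]] := eqC _ _ _ _ E.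
    rewrite hb hb'; by have [_ [-> _]] := CL hC. }
  split.
  { move=> i j j' hjj; case: (hqc i) => x _ [_ hc]; rewrite !hc.
    have h : d - j < d - j' by have := ltn_ord j; lia.
    have := gmono _ _ (C_mono x h); split; lia. }
  split.
  { move=> i j i' j' [h1 h2]; have E : (q i).2 j = (q i').2 j' by lia.
    have [x [y [[_ _ hC] _]]] := eqC _ _ _ _ E.
    have [hm _] := CL hC; apply: val_inj => /=.
    have := ltn_ord j; have := ltn_ord j'; lia. }
  move=> j jm hj i i' hne [h1 h2]; apply: hne.
  have E : (q i).2 jm = (q i').2 jm by lia.
  have [x [y [_ ht]]] := eqC _ _ _ _ E.
  case: (hqc i) => x' _ [_ hc]; case: (hqc i') => y' _ [_ hc'].
  have E' : (q i).2 j = (q i').2 j.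
    move: E; rewrite hc hc' => /ginj /CL [_ [_ ht']].
    rewrite hc hc' ht' //; lia.
  by rewrite E'.
Qed.
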